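(* Let $\Sigma$ be an alphabet and $A$ a nontrivial finite abelian group. There is no subgroup $G\le\llbracket\Sigma^{\mathbb{Z}}\rrbracket$ isomorphic to $\mathbb{Z}^2$ whose action is move-$A$ithful.
   Context: An alphabet is a finite set with at least two elements. $\llbracket\Sigma^{\mathbb{Z}}\rrbracket$ is the group of homeomorphisms $f$ of $\Sigma^{\mathbb{Z}}$ with a continuous cocycle $c_f:\Sigma^{\mathbb{Z}}\to\mathbb{Z}$ such that $f(x)=\sigma^{c_f(x)}(x)$, where $\sigma(x)_i=x_{i+1}$; for $g\in G$ write $c_g$ for its cocycle. For a finite abelian group $A$, the action of $G\le\llbracket\Sigma^{\mathbb{Z}}\rrbracket$ is move-$A$ithful if for every map $\beta:G\to A$ with finite nonempty support there exist $x\in\Sigma^{\mathbb{Z}}$ and $\gamma:\mathbb{Z}\to\mathrm{End}(A)$ with $\sum_{g\in G}\gamma(c_g(x))(\beta(g))\neq0_A$. *)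

(* Defs.v *)
From HB Require Import structures.
From mathcomp Require Import all_boot all_order all_algebra.
Set Implicit Arguments. Unset Strict Implicit. Unset Printing Implicit Defensive.
Import Order.TTheory GRing.Theory Num.Theory.
Local Open Scope ring_scope.

Definition config (S : finType) := int -> S.

Definition shiftZ (S : finType) (k : int) (x : config S) : config S :=
  fun i => x (i + k).

Definition agree (S : finType) (n : nat) (x y : config S) : Prop :=
  forall i : int, (`|i| <= n)%N -> x i = y i.

(* Continuity for the product topology of discrete Sigma (Cantor topology). *)
Definition cont_map (S : finType) (f : config S -> config S) : Prop :=
  forall (x : config S) (m : nat), exists n : nat,
    forall y, agree n x y -> agree m (f x) (f y).

(* Continuity of a Z-valued map (Z discrete) = local constancy. *)
Definition cont_int (S : finType) (c : config S -> int) : Prop :=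
  forall x : config S, exists n : nat, forall y, agree n x y -> c y = c x.

Definition homeo (S : finType) (f : config S -> config S) : Prop :=
  exists g : config S -> config S,
    cancel f g /\ cancel g f /\ cont_map f /\ cont_map g.

Definition cocycle_of (S : finType) (f : config S -> config S)
  (c : config S -> int) : Prop :=
  cont_int c /\ forall x, f x = shiftZ (c x) x.

Definition in_TFG (S : finType) (f : config S -> config S) : Prop :=
  homeo f /\ exists c, cocycle_of f c.

(* phi : Z^2 -> [[Sigma^Z]] is an injective group homomorphism, i.e. its
   image G is a subgroup of [[Sigma^Z]] isomorphic to Z^2 (via phi). *)
Definition Z2_embedding (S : finType) (phi : int * int -> (config S -> config S)) : Prop :=
  (forall p, in_TFG (phi p)) /\
  (forall p q : int * int, phi (p.1 + q.1, p.2 + q.2) = phi p \o phi q) /\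
  injective phi.

(* Move-A-ithfulness of the action of G = image phi, where c p is the
   cocycle of phi p and a map beta : G -> A is transported to Z^2 via phi.
   The sum over g in G of a finitely supported family is computed over any
   duplicate-free list s containing the support (terms outside the support
   vanish since gamma(k) is additive). *)
Definition move_faithful (S : finType) (A : finZmodType)
  (c : int * int -> config S -> int) : Prop :=
  forall (beta : int * int -> A) (s : seq (int * int)),
    uniq s -> (forall p, beta p != 0 -> p \in s) -> (exists p, beta p != 0) ->
    exists (x : config S) (gamma : int -> {additive A -> A}),
      \sum_(p <- s) gamma (c p x) (beta p) != 0.

(* Main.v *)
Require Import Defs.
From HB Require Import structures.
From mathcomp Require Import all_boot all_order all_algebra.
From mathcomp Require Import zify.
From Stdlib Require Import Classical IndefiniteDescription FunctionalExtensionality.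
Set Implicit Arguments. Unset Strict Implicit. Unset Printing Implicit Defensive.
Import Order.TTheory GRing.Theory Num.Theory.
Local Open Scope ring_scope.


Lemma list_bound (T : eqType) (P : T -> nat -> Prop) (l : seq T) :
  (forall x m m', (m <= m')%N -> P x m -> P x m') ->
  (forall x, x \in l -> exists m, P x m) -> exists m, forall x, x \in l -> P x m.
Proof.
move=> mono; elim: l => [|a l IH] H; first by exists 0%N.
have [m1 Hm1] := H a (mem_head _ _).
have [m2 Hm2] : exists m, forall x, x \in l -> P x m.
  by apply: IH => x xl; apply: H; rewrite inE xl orbT.
exists (maxn m1 m2) => x; rewrite inE => /orP [/eqP -> | xl].
  by apply: mono Hm1; rewrite leq_maxl.
by apply: mono (Hm2 x xl); rewrite leq_maxr.
Qed.

Definition agr (S : finType) (n : nat) (z y : config S) :=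
  forall i : int, (absz i < n)%N -> z i = y i.
Definition Bd (S : finType) (g : config S -> int) (n : nat) (z : config S) :=
  exists M : nat, forall y, agr n z y -> (absz (g y) <= M)%N.

Lemma split_cyl (S : finType) (g : config S -> int) n z :
  ~ Bd g n z -> exists z', agr n z z' /\ ~ Bd g n.+1 z'.
Proof.
move=> nB; apply: NNPP => H; apply: nB.
pose zab (ab : S * S) : config S := fun i =>
  if i == - (n%:Z) then ab.1 else if i == n%:Z then ab.2 else z i.
have [M HM] : exists M, forall ab, ab \in enum {: S * S} ->
    forall y, agr n.+1 (zab ab) y -> (absz (g y) <= M)%N.
  apply: list_bound.
    by move=> ab m m' le Hm y Hy; apply: leq_trans (Hm y Hy) le.
  move=> ab _; apply: NNPP => nb; apply: H; exists (zab ab); split.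
    move=> i Hi; rewrite /zab.
    have -> : (i == - n%:Z) = false by apply/eqP => e; move: Hi; rewrite e; lia.
    have -> : (i == n%:Z) = false by apply/eqP => e; move: Hi; rewrite e; lia.
    by [].
  by case=> M HM; apply: nb; exists M.
exists M => y Hy; apply: (HM (y (- n%:Z), y n%:Z)); first by rewrite mem_enum.
move=> i Hi; rewrite /zab /=.
case: eqP => [-> //|ne1]; case: eqP => [-> //|ne2].
apply: Hy; lia.
Qed.

Lemma cont_bounded (S : finType) (g : config S -> int) (s0 : S) :
  cont_int g -> exists M : nat, forall x, (absz (g x) <= M)%N.
Proof.
move=> cg; apply: NNPP => nb.
have B0 : ~ Bd g 0 (fun _ => s0).
  by case=> M HM; apply: nb; exists M => x; apply: HM => i; rewrite ltn0.
have step : forall zn : config S * nat, exists z',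
    ~ Bd g zn.2 zn.1 -> agr zn.2 zn.1 z' /\ ~ Bd g zn.2.+1 z'.
  move=> [z n] /=; case: (classic (Bd g n z)) => [b|nb']; first by exists z.
  by have [z' Hz'] := split_cyl nb'; exists z'.
have [nxt Hnxt] := functional_choice _ step.
pose zs := fix zs k := if k is k'.+1 then nxt (zs k', k') else (fun _ => s0).
have nB : forall k, ~ Bd g k (zs k).
  by elim=> [|k IH] //=; apply: (Hnxt (zs k, k) IH).2.
have ag : forall k, agr k (zs k) (zs k.+1) by move=> k; apply: (Hnxt (zs k, k) (nB k)).1.
have agm : forall m d, agr m (zs m) (zs (m + d)%N).
  move=> m; elim=> [|d IH].
    by rewrite addn0.
  move=> i Hi; rewrite (IH i Hi) addnS; apply: ag; lia.
pose x : config S := fun i => zs (absz i).+1 i.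
have agx : forall k, agr k (zs k) x.
  move=> k i Hi; rewrite /x; have := agm (absz i).+1 (k - (absz i).+1)%N i.
  have -> : ((absz i).+1 + (k - (absz i).+1))%N = k by lia.
  by move=> ->.
have [N HN] := cg x.
apply: (nB N.+1); exists (absz (g x)) => y Hy.
rewrite (HN y) // => i Hi; rewrite -(agx N.+1 i) ?ltnS //; apply: Hy; lia.
Qed.


Lemma shiftZ_comp (S : finType) k l (z : config S) :
  shiftZ k (shiftZ l z) = shiftZ (l + k) z.
Proof. by apply: functional_extensionality => i; rewrite /shiftZ addrA addrAC. Qed.

Definition aper (S : finType) (x : config S) (W : nat) (a b : S) : config S :=
  fun i => if (absz i <= W)%N then x i else if 0 < i then a else b.

Lemma aper_agree (S : finType) (x : config S) W a b : agree W x (aper x W a b).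
Proof. by move=> i Hi; rewrite /aper Hi. Qed.

Lemma aper_aperiodic (S : finType) (x : config S) W (a b : S) : a != b ->
  forall k l, shiftZ k (aper x W a b) = shiftZ l (aper x W a b) -> k = l.
Proof.
move=> ab k l E; apply: NNPP => kl.
set y := aper x W a b in E.
have per : forall j, y (j + (k - l)) = y j.
  move=> j; have := congr1 (fun f => f (j - l)) E; rewrite /shiftZ.
  have -> : j - l + k = j + (k - l) by lia.
  by have -> : j - l + l = j by lia.
have itr : forall (t : nat) j, y (j + (k - l) * t%:Z) = y j.
  elim=> [|t IH] j; first by rewrite mulr0 addr0.
  have -> : j + (k - l) * t.+1%:Z = (j + (k - l) * t%:Z) + (k - l).
    rewrite -addn1 PoszD mulrDr mulr1; lia.
  by rewrite per IH.
case: (ltrP 0 (k - l)) => hm.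
  have := itr (2 * W + 2)%N (- (W%:Z + 1)).
  rewrite /y /aper.
  have -> : (absz (- (W%:Z + 1) + (k - l) * (2 * W + 2)%N%:Z)%R <= W)%N = false by nia.
  have -> : (0 < - (W%:Z + 1) + (k - l) * (2 * W + 2)%N%:Z) = true by nia.
  have -> : (absz (- (W%:Z + 1))%R <= W)%N = false by lia.
  have -> : (0 < - (W%:Z + 1)) = false by lia.
  by move=> e; move: ab; rewrite e eqxx.
have hm' : k - l < 0 by rewrite lt_neqAle hm andbT subr_eq0; apply/eqP.
have := itr (2 * W + 2)%N (W%:Z + 1).
rewrite /y /aper.
have -> : (absz ((W%:Z + 1) + (k - l) * (2 * W + 2)%N%:Z)%R <= W)%N = false by nia.
have -> : (0 < (W%:Z + 1) + (k - l) * (2 * W + 2)%N%:Z) = false by nia.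
have -> : (absz (W%:Z + 1)%R <= W)%N = false by lia.
have -> : (0 < (W%:Z + 1)) = true by lia.
by move=> e; move: ab; rewrite e eqxx.
Qed.

Lemma window (S : finType) (c : int * int -> config S -> int) (l : seq (int * int)) x :
  (forall p, cont_int (c p)) ->
  exists W : nat, forall p, p \in l -> forall y, agree W x y -> c p y = c p x.
Proof.
move=> cc; apply: list_bound.
  by move=> p m m' le H y Hy; apply: H => i Hi; apply: Hy; apply: leq_trans le.
move=> p _; have [n Hn] := cc p x; by exists n.
Qed.


Definition padd (p q : int * int) : int * int := (p.1 + q.1, p.2 + q.2).
Definition psub (p q : int * int) : int * int := (p.1 - q.1, p.2 - q.2).

Lemma psub_padd p w : psub (padd p w) w = p.
Proof. by case: p => a b; rewrite /padd /psub /= !addrK. Qed.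
Lemma padd_psub p w : padd (psub p w) w = p.
Proof. by case: p => a b; rewrite /padd /psub /= !subrK. Qed.

Definition dstep (A : zmodType) (w : int * int) (g : int * int -> A) :=
  fun p => g p - g (psub p w).
Definition supp_in (A : zmodType) (g : int * int -> A) (s : seq (int * int)) :=
  uniq s /\ forall p, g p != 0 -> p \in s.

Lemma indep (A : zmodType) (g : int * int -> A) s1 s2 (P : pred (int * int)) :
  supp_in g s1 -> supp_in g s2 ->
  \sum_(p <- s1 | P p) g p = \sum_(p <- s2 | P p) g p.
Proof.
have red : forall s, \sum_(p <- s | P p) g p = \sum_(p <- [seq p <- s | P p && (g p != 0)]) g p.
  move=> s; rewrite big_filter (bigID (fun p => g p != 0)) /=.
  by rewrite [X in _ + X]big1 ?addr0 // => p /andP [_ /negPn/eqP].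
move=> [u1 h1] [u2 h2]; rewrite !red; apply: perm_big; apply: uniq_perm.
- exact: filter_uniq.
- exact: filter_uniq.
move=> p; rewrite !mem_filter; case: (P p) => //=; case nz: (g p != 0) => //=.
by rewrite h1 ?h2 ?nz.
Qed.

Lemma shift_sum (A : zmodType) (g : int * int -> A) t s w (P : pred (int * int)) :
  supp_in g t -> supp_in (fun p => g (psub p w)) s ->
  \sum_(p <- s | P p) g (psub p w) = \sum_(q <- t | P (padd q w)) g q.
Proof.
move=> [ut ht] hs.
rewrite (indep (s2 := map (padd^~ w) t) P hs); last first.
  split; first by rewrite map_inj_uniq // => p q e; rewrite -(psub_padd p w) e psub_padd.
  by move=> p /ht hp; apply/mapP; exists (psub p w); rewrite ?padd_psub.
by rewrite big_map; apply: eq_bigr => q _; rewrite psub_padd.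
Qed.

Lemma supp_dstep (A : zmodType) (g : int * int -> A) t w :
  supp_in g t -> supp_in (dstep w g) (undup (t ++ map (padd^~ w) t)).
Proof.
move=> [ut ht]; split; first exact: undup_uniq.
move=> p; rewrite mem_undup mem_cat /dstep.
case: (g p =P 0) => [->|/eqP /ht -> //]; rewrite sub0r oppr_eq0 => /ht hp.
by apply/orP; right; apply/mapP; exists (psub p w); rewrite ?padd_psub.
Qed.

Lemma dstep_sum (A : zmodType) (g : int * int -> A) t s w (P : pred (int * int)) :
  supp_in g t -> supp_in (dstep w g) s ->
  \sum_(p <- s | P p) dstep w g p =
  \sum_(p <- t | P p) g p - \sum_(q <- t | P (padd q w)) g q.
Proof.
move=> ht hs; set u := undup (t ++ map (padd^~ w) t).
have hu := supp_dstep w ht.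
rewrite (indep P hs hu) /dstep sumrB.
have hu1 : supp_in g u.
  split; first exact: undup_uniq.
  by move=> p /ht.2 hp; rewrite mem_undup mem_cat hp.
have hu2 : supp_in (fun p => g (psub p w)) u.
  split; first exact: undup_uniq.
  move=> p /ht.2 hp; rewrite mem_undup mem_cat; apply/orP; right.
  by apply/mapP; exists (psub p w); rewrite ?padd_psub.
by rewrite (indep P hu1 ht) (shift_sum P ht hu2).
Qed.

Definition ZS (A : zmodType) (f : int * int -> int) (g : int * int -> A) :=
  forall s, supp_in g s -> forall p0, \sum_(p <- s | f p == f p0) g p = 0.

Lemma ZS_create (A : zmodType) f (g : int * int -> A) t w :
  supp_in g t -> (forall p, f (padd p w) = f p) -> ZS f (dstep w g).
Proof.
move=> ht hw s hs p0; rewrite (dstep_sum _ ht hs).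
by rewrite [X in _ - X](eq_bigl (fun q => f q == f p0)) ?subrr // => q; rewrite hw.
Qed.

Lemma ZS_pres (A : zmodType) f (g : int * int -> A) t w :
  supp_in g t -> (forall p q, (f (padd p w) == f (padd q w)) = (f p == f q)) ->
  ZS f g -> ZS f (dstep w g).
Proof.
move=> ht hw zg s hs p0; rewrite (dstep_sum _ ht hs).
rewrite [X in _ - X](eq_bigl (fun q => f q == f (psub p0 w))); last first.
  by move=> q; rewrite -{1}(padd_psub p0 w) hw.
by rewrite !zg // subrr.
Qed.

Definition delta0 (A : zmodType) (a : A) : int * int -> A :=
  fun p => if p == (0, 0) then a else 0.
Definition beta_of (A : zmodType) (a : A) (vs : seq (int * int)) :=
  foldr (fun w g => dstep w g) (delta0 a) vs.

Lemma beta_fin (A : zmodType) (a : A) vs : exists t, supp_in (beta_of a vs) t.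
Proof.
elim: vs => [|w vs [t ht]] /=.
  exists [:: (0, 0)]; split => // p; rewrite /delta0 mem_seq1.
  by case: (p == (0, 0)); rewrite ?eqxx.
by exists (undup (t ++ map (padd^~ w) t)); apply: supp_dstep.
Qed.

Definition lexneg (p : int * int) := (p.1 < 0) || ((p.1 == 0) && (p.2 < 0)).
Definition lexpos (p : int * int) := (0 < p.1) || ((p.1 == 0) && (0 < p.2)).

Lemma beta_lex (A : zmodType) (a : A) vs : all lexpos vs ->
  (forall p, lexneg p -> beta_of a vs p = 0) /\ beta_of a vs (0, 0) = a.
Proof.
elim: vs => [|w vs IH] /=.
  split; last by rewrite /delta0 eqxx.
  move=> [p1 p2] hp; rewrite /delta0; case: eqP => // [[e1 e2]].
  by move: hp; rewrite /lexneg /= e1 e2 ltxx.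
move=> /andP [hw /IH [h1 h2]]; split.
  move=> p hp; rewrite /dstep !h1 ?subrr //.
  by move: hp hw; case: p => p1 p2; case: w => w1 w2; rewrite /lexneg /lexpos /psub /=; lia.
rewrite /dstep h2 h1 ?subr0 //.
by move: hw; case: w => w1 w2; rewrite /lexneg /lexpos /psub /=; lia.
Qed.

Lemma beta_ZS (A : zmodType) (a : A) vs f d :
  (forall p, f (padd p d) = f p) ->
  (forall w p q, (f (padd p w) == f (padd q w)) = (f p == f q)) ->
  (d \in vs) || (psub (0, 0) d \in vs) -> ZS f (beta_of a vs).
Proof.
move=> hd hT; elim: vs => [|w vs IH] //=.
have [t ht] := beta_fin a vs.
case: (w =P d) => [->|nd]; first by move=> _; apply: ZS_create ht hd.
case: (w =P psub (0, 0) d) => [->|nd'].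
  move=> _; apply: ZS_create ht _ => p.
  rewrite -{2}(psub_padd p (psub (0,0) d)) -{1}(hd (padd p (psub (0, 0) d))).
  congr f; case: p => p1 p2; case: d {hd nd IH} => d1 d2; rewrite /padd /psub /=.
  congr (_, _); lia.
rewrite !inE; have -> : (d == w) = false by apply/eqP => e; apply: nd.
have -> : (psub (0, 0) d == w) = false by apply/eqP => e; apply: nd'.
by move=> /IH; apply: ZS_pres ht (hT w).
Qed.

Lemma fiber_sum (A : zmodType) (f : int * int -> int) (gamma : int -> {additive A -> A})
  (b : int * int -> A) (t : seq (int * int)) :
  (forall k, \sum_(p <- t | f p == k) b p = 0) ->
  \sum_(p <- t) gamma (f p) (b p) = 0.
Proof.
move: {2}(size t) (leqnn (size t)) => N; elim: N t => [|N IH] t.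
  by rewrite leqn0 => /nilP -> _; rewrite big_nil.
case: t => [|p0 t] Hsz H; first by rewrite big_nil.
rewrite (bigID (fun p => f p == f p0)) /=.
have -> : \sum_(p <- p0 :: t | f p == f p0) gamma (f p) (b p) =
          gamma (f p0) (\sum_(p <- p0 :: t | f p == f p0) b p).
  by rewrite raddf_sum; apply: eq_bigr => p /eqP ->.
rewrite H raddf0 add0r -big_filter; apply: IH.
  rewrite /= eqxx /= size_filter; apply: leq_trans (count_size _ _) _; by rewrite -ltnS.
move=> k; rewrite big_filter_cond.
case: (k =P f p0) => [->|nk].
  by rewrite big_pred0 // => p; case: eqP.
rewrite -[RHS](H k); apply: eq_bigl => p /=; case: (f p =P k) => [->|]; last by rewrite andbF.
by rewrite andbT; apply/eqP => e; apply: nk.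
Qed.


Definition Lst (n : nat) : seq int := [seq (k%:Z - n%:Z) | k <- iota 0 (n + n).+1].
Definition vs (n : nat) : seq (int * int) :=
  [seq p <- [seq (i, j) | i <- Lst n, j <- Lst n] | lexpos p].

Lemma vs_lexpos n : all lexpos (vs n).
Proof. exact: filter_all. Qed.

Lemma Lst_mem n (i : int) : (absz i <= n)%N -> i \in Lst n.
Proof.
move=> hi; apply/mapP; exists (absz (i + n%:Z)); last by lia.
rewrite mem_iota; lia.
Qed.

Lemma vs_mem n (d : int * int) : d != (0, 0) -> (absz d.1 <= n)%N -> (absz d.2 <= n)%N ->
  (d \in vs n) || (psub (0, 0) d \in vs n).
Proof.
case: d => d1 d2 /= nz h1 h2; rewrite !mem_filter /psub /=.
have mem : forall a b : int, (absz a <= n)%N -> (absz b <= n)%N ->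
    (a, b) \in [seq (i, j) | i <- Lst n, j <- Lst n].
  by move=> a b ha hb; apply/allpairsP; exists (a, b); rewrite !Lst_mem.
rewrite !mem //; try lia.
rewrite !andbT /lexpos /=.
have : (d1 != 0) || (d2 != 0).
  by move: nz; rewrite xpair_eqE negb_and.
lia.
Qed.

Lemma tri (a b c : int) (x y N : nat) : (x <= N)%N -> (y <= N)%N ->
  (absz (a - b)%R <= y)%N -> (absz (b - c)%R <= x)%N -> (absz (a - c)%R <= 2 * N)%N.
Proof. lia. Qed.

Lemma l1 (a z : int) (K M : nat) : (absz (a - z)%R <= K)%N -> M = (2 * K)%N ->
  (absz (a - z + K%:Z)%R < M.+1)%N.
Proof. lia. Qed.
Lemma l2 (a b z : int) (K : nat) : (absz (a - z)%R <= K)%N -> (absz (b - z)%R <= K)%N ->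
  absz (a - z + K%:Z)%R = absz (b - z + K%:Z)%R -> a = b.
Proof. lia. Qed.

Lemma pigeon (f : int * int -> int) (R : nat) :
  (forall p, (absz (f (padd p (1, 0)) - f p)%R <= R)%N) ->
  (forall p, (absz (f (padd p (0, 1)) - f p)%R <= R)%N) ->
  exists p q, p != q /\ f p = f q /\
    (absz (q.1 - p.1)%R <= 4 * R + 1)%N /\ (absz (q.2 - p.2)%R <= 4 * R + 1)%N.
Proof.
move=> h1 h2; set n := (4 * R + 1)%N.
have b1 : forall i : nat, (absz (f (i%:Z, 0) - f (0, 0))%R <= i * R)%N.
  elim=> [|i IH]; first by rewrite subrr.
  have e : padd (i%:Z, 0) (1, 0) = (i.+1%:Z, 0) by rewrite /padd /= addr0; congr (_, _); lia.
  have := h1 (i%:Z, 0); rewrite e.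
  move: IH; generalize (f (i.+1%:Z, 0)) (f (i%:Z, 0)) (f (0, 0)) => x y z; lia.
have b2 : forall (i j : nat), (absz (f (i%:Z, j%:Z) - f (i%:Z, 0))%R <= j * R)%N.
  move=> i; elim=> [|j IH]; first by rewrite subrr.
  have e : padd (i%:Z, j%:Z) (0, 1) = (i%:Z, j.+1%:Z) by rewrite /padd /= addr0; congr (_, _); lia.
  have := h2 (i%:Z, j%:Z); rewrite e.
  move: IH; generalize (f (i%:Z, j.+1%:Z)) (f (i%:Z, j%:Z)) (f (i%:Z, 0)) => x y z; lia.
pose g (ij : 'I_n.+1 * 'I_n.+1) : 'I_(4 * n * R).+1 :=
  inord (absz (f ((ij.1 : nat)%:Z, (ij.2 : nat)%:Z) - f (0, 0) + (2 * n * R)%N%:Z)).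
have bnd : forall ij : 'I_n.+1 * 'I_n.+1,
    (absz (f ((ij.1 : nat)%:Z, (ij.2 : nat)%:Z) - f (0, 0))%R <= 2 * n * R)%N.
  move=> [i j] /=; have := b1 i; have := b2 i j.
  have li : (i * R <= n * R)%N by apply: leq_mul; rewrite // -ltnS.
  have lj : (j * R <= n * R)%N by apply: leq_mul; rewrite // -ltnS.
  rewrite -mulnA; apply: tri li lj.
have : ~~ injectiveb g.
  apply/negP => /injectiveP inj; have := leq_card g inj.
  rewrite card_prod !card_ord /n; nia.
case/injectivePn => [[i1 j1]] [[i2 j2]] ne e.
exists ((i1 : nat)%:Z, (j1 : nat)%:Z), ((i2 : nat)%:Z, (j2 : nat)%:Z).
have e' : f ((i1 : nat)%:Z, (j1 : nat)%:Z) = f ((i2 : nat)%:Z, (j2 : nat)%:Z).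
  have ha := bnd (i1, j1); have hb := bnd (i2, j2).
  have e4 : (4 * n * R = 2 * (2 * n * R))%N by rewrite !mulnA.
  move: e; rewrite /g => /(congr1 val) /=; rewrite !inordK; [|exact: l1 hb e4|exact: l1 ha e4].
  exact: l2 ha hb.
split; last split => //.
  apply: contra ne => /eqP [E1 E2].
  have F1 : (i1 : nat) = i2 by lia.
  have F2 : (j1 : nat) = j2 by lia.
  by rewrite xpair_eqE; apply/andP; split; apply/eqP/val_inj.
have := ltn_ord i1; have := ltn_ord i2; have := ltn_ord j1; have := ltn_ord j2.
rewrite /=; lia.
Qed.


Lemma paddC p w : padd p w = padd w p.
Proof. by rewrite /padd addrC [p.2 + _]addrC. Qed.

Theorem mainTheorem15 (S : finType) (A : finZmodType)
  (hS : (1 < #|S|)%N) (hA : (1 < #|A|)%N) :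
  ~ exists (phi : int * int -> (config S -> config S))
           (c : int * int -> config S -> int),
      Z2_embedding phi /\ (forall p, cocycle_of (phi p) (c p)) /\
      move_faithful A c.
Proof.
move=> [phi [c [[HT [Hlaw Hinj]] [Hc Hmf]]]].
have [s1 [s2 [_ _ ns]]] := card_gt1P hS.
have [a0 [a1 [_ _ na]]] := card_gt1P hA.
have [a anz] : exists a : A, a != 0.
  case: (a0 =P 0) => [e|/eqP h]; last by exists a0.
  by exists a1; rewrite -e eq_sym.
have cc : forall p, cont_int (c p) := fun p => (Hc p).1.
have hc : forall p z, phi p z = shiftZ (c p z) z := fun p => (Hc p).2.
have [M1 HM1] := cont_bounded s1 (cc (1, 0)).
have [M2 HM2] := cont_bounded s1 (cc (0, 1)).
set R := maxn M1 M2.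
set n := (4 * R + 1)%N.
have [t ht] := beta_fin a (vs n).
have [bneg b0] := beta_lex a (vs_lexpos n).
have [x [gamma Hne]] := Hmf (beta_of a (vs n)) t ht.1 ht.2
  (ex_intro _ (0, 0) (eq_ind_r (fun v => v != 0) anz b0)).
have [W HW] := window t x cc.
set y := aper x W s1 s2.
have hap := @aper_aperiodic S x W s1 s2 ns.
have hag := @aper_agree S x W s1 s2.
set f := fun p => c p y.
have injphi : forall w, injective (phi w).
  by move=> w; case: (HT w).1 => g [can _]; exact: can_inj can.
have law : forall p q, phi (padd p q) = phi p \o phi q := Hlaw.
have fe : forall p q, (f p = f q) <-> (phi p y = phi q y).
  move=> p q; split; first by rewrite !hc /f => ->.
  by rewrite !hc; apply: hap.
have hT : forall w p q, (f (padd p w) == f (padd q w)) = (f p == f q).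
  move=> w p q; apply/eqP/eqP => E; apply/fe; move/fe: E.
    by rewrite !(paddC _ w) !law /= => /injphi.
  by rewrite !(paddC _ w) !law /= => ->.
have lip : forall e p, f (padd p e) = f p + c e (shiftZ (f p) y).
  move=> e p; apply: hap; rewrite -hc paddC law /= hc.
  by rewrite [phi p y]hc shiftZ_comp.
have lip1 : forall p, (absz (f (padd p (1, 0)) - f p)%R <= R)%N.
  move=> p; rewrite lip addrC addKr; apply: leq_trans (HM1 _) _; exact: leq_maxl.
have lip2 : forall p, (absz (f (padd p (0, 1)) - f p)%R <= R)%N.
  move=> p; rewrite lip addrC addKr; apply: leq_trans (HM2 _) _; exact: leq_maxr.
have [p [q [npq [fpq [bd1 bd2]]]]] := pigeon lip1 lip2.
set d := psub q p.
have hd : forall r, f (padd r d) = f r.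
  move=> r; apply/fe.
  have -> : padd r d = padd (psub r p) q.
    by rewrite /padd /psub /=; congr (_, _); lia.
  rewrite law /=; move/fe: fpq => <-.
  by rewrite -[X in _ = phi X y](padd_psub r p) law.
have dnz : d != (0, 0).
  apply: contra npq; rewrite /d /psub; clear.
  case: p => p1 p2; case: q => q1 q2 /=; rewrite !xpair_eqE => /andP [/eqP h1 /eqP h2].
  apply/andP; split; apply/eqP; lia.
have hmem := vs_mem dnz bd1 bd2.
have zs := beta_ZS (a:=a) hd hT hmem.
have H0 : \sum_(p <- t) gamma (f p) (beta_of a (vs n) p) = 0.
  apply: fiber_sum => k.
  case: (boolP (has (fun r => f r == k) t)) => [/hasP [p0 _ /eqP <-]|hn].
    exact: zs.
  exact: big_hasC.
move: Hne; rewrite (eq_big_seq (fun p => gamma (f p) (beta_of a (vs n) p))).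
  by rewrite H0 eqxx.
by move=> r rt; rewrite /f (HW r rt y hag).
Qed.
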